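(* Assume $W_c$ satisfies Assumption 1, let $k,n\ge2$ be integers, write $U:=U[W_s,W_c,\downarrow;\frac{k-1}{n-1}]$, and let $\theta_0<1$ satisfy $(1-\theta_0)U'(\theta_0)+U(\theta_0)=R$. Then \[ \log P_j(k,n)\ge\sup_{s>0,\ \theta_0<\rho<1}\frac{1+s}{s}\Big[-(n-1)\frac{U(\rho(1+s))}{1+s}+(n-1)U(\rho)+\delta_1(s,\rho)+\log\Big(1-2e^{(n-1)\left((\rho-\theta_0)U'(\theta_0)+U(\theta_0)-U(\rho)\right)+\delta_2(\rho)}\Big)\Big], \] where \[\delta_1(s,\rho):=-\frac{\overline\delta_{W_s}((1+s)\rho)+\overline\delta_{W_c}((1+s)\rho)}{1+s}+\underline\delta_{W_s}(\rho)+\underline\delta_{W_c}(\rho),\] \[\delta_2(\rho):=\frac{(1-\rho)\big(\overline\delta_{W_s}(\theta_0)+\overline\delta_{W_c}(\theta_0)\big)-(1-\theta_0)\big(\underline\delta_{W_s}(\rho)+\underline\delta_{W_c}(\rho)\big)+(\rho-\theta_0)R}{1-\theta_0}.\]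
   Context: Setup. $\mathcal M$ is a finite set and $W_s=\{W_s(m|m')\}$ an irreducible aperiodic transition matrix on $\mathcal M$; the message $M^k=(M_1,\dots,M_k)$ has law $P_{M^k}(m^k)=P_{M_1}(m_1)\prod_{i=2}^kW_s(m_i|m_{i-1})$ for some initial distribution $P_{M_1}$. $\mathcal X$ is a finite abelian group, $\mathcal Z$ a finite set, $W_c=\{W_c(x,z|x',z')\}$ an irreducible aperiodic transition matrix on $\mathcal X\times\mathcal Z$, and $(X^n,Z^n)$ has law $P_{X^nZ^n}(x^n,z^n)=P_{X_1Z_1}(x_1,z_1)\prod_{i=2}^nW_c(x_i,z_i|x_{i-1},z_{i-1})$ for an initial distribution $P_{X_1Z_1}$ with marginal $P_{Z_1}$. The channel maps input $\tilde x^n\in\mathcal X^n$ to output $(x^n,z^n)$ with probability $P_{X^nZ^n}(x^n-\tilde x^n,z^n)$. A code is $(\mathsf e,\mathsf d)$ with $\mathsf e:\mathcal M^k\to\mathcal X^n$, $\mathsf d:(\mathcal X\times\mathcal Z)^n\to\mathcal M^k$; $P_j(k,n)$ is the infimum over codes of $\sum_{m^k}P_{M^k}(m^k)\Pr[\mathsf d(\text{output})\ne m^k\mid\text{input }\mathsf e(m^k)]$. $R:=\log|\mathcal X|$. Convention $\log t:=-\infty$ for $t\le0$. Assumption 1: $\sum_xW_c(x,z|x',z')$ does not depend on $x'$; call it $W_{c,Z}(z|z')$. Perron–Frobenius notation: entrywise powers $a^t$ of transition probabilities are taken to be $0$ when $a=0$. For a nonnegative irreducible matrix $A$ indexed by a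 finite set, $\lambda(A)$ is its Perron–Frobenius eigenvalue and $v_A$ the positive vector with $\sum_iv_A(i)A(i,j)=\lambda(A)v_A(j)$ for all $j$, normalized so $\min_iv_A(i)=1$. Quantities. $A^s_\theta(m,m'):=W_s(m|m')^{1-\theta}$; $A^c_\theta((x,z),(x',z')):=W_c(x,z|x',z')^{1-\theta}W_{c,Z}(z|z')^{\theta}$. $\theta H^{W_s}_{1-\theta}(M):=\log\lambda(A^s_\theta)$, $\theta H^{W_c,\downarrow}_{1-\theta}(X|Z):=\log\lambda(A^c_\theta)$. For $r>0$: $U[W_s,W_c,\downarrow;r](\theta):=r\theta H^{W_s}_{1-\theta}(M)+\theta H^{W_c,\downarrow}_{1-\theta}(X|Z)$. With $w^s_\theta(m):=P_{M_1}(m)^{1-\theta}$ and $w^c_\theta(x,z):=P_{X_1Z_1}(x,z)^{1-\theta}P_{Z_1}(z)^{\theta}$: $\overline\delta_{W_s}(\theta):=\log(v_{A^s_\theta}\cdot w^s_\theta)$, $\underline\delta_{W_s}(\theta):=\overline\delta_{W_s}(\theta)-\log\max_mv_{A^s_\theta}(m)$, $\overline\delta_{W_c}(\theta):=\log(v_{A^c_\theta}\cdot w^c_\theta)$, $\underline\delta_{W_c}(\theta):=\overline\delta_{W_c}(\theta)-\log\max_{x,z}v_{A^c_\theta}(x,z)$. *)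

(* Defs.v *)
From HB Require Import structures.
From mathcomp Require Import all_boot all_order all_algebra.
From Stdlib Require Import Reals ClassicalEpsilon.
Set Implicit Arguments. Unset Strict Implicit. Unset Printing Implicit Defensive.
Local Open Scope R_scope.

Definition rsum (T : finType) (F : T -> R) : R := \big[Rplus/0]_(i : T) F i.
Definition rmax (T : finType) (F : T -> R) : R := \big[Rmax/0]_(i : T) F i.

(* a^t with the convention a^t := 0 when a <= 0 (used for a = 0) *)
Definition rpow0 (a t : R) : R := if Rlt_dec 0 a then Rpower a t else 0.

Fixpoint mpow (T : finType) (A : T -> T -> R) (N : nat) (i j : T) : R :=
  match N with
  | O => if i == j then 1 else 0
  | S N' => rsum (fun l => A i l * mpow A N' l j)
  end.

(* W i j = W(i|j): transition probability from j to i *)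
Definition stochastic (T : finType) (W : T -> T -> R) : Prop :=
  (forall i j, 0 <= W i j) /\ (forall j, rsum (fun i => W i j) = 1).
Definition distribution (T : finType) (P : T -> R) : Prop :=
  (forall i, 0 <= P i) /\ rsum P = 1.
Definition irreducible (T : finType) (A : T -> T -> R) : Prop :=
  forall i j, exists N : nat, (leq 1 N : Prop) /\ 0 < mpow A N i j.
Definition aperiodic (T : finType) (A : T -> T -> R) : Prop :=
  forall (i : T) (d : nat),
    (forall N : nat, (leq 1 N : Prop) -> 0 < mpow A N i i -> (dvdn d N : Prop)) -> d = 1%nat.

Definition is_PF (T : finType) (A : T -> T -> R) (lam : R) (v : T -> R) : Prop :=
  0 < lam /\ (forall i, 1 <= v i) /\ (exists i, v i = 1) /\
  (forall j, rsum (fun i => v i * A i j) = lam * v j).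
Definition PF_pair (T : finType) (A : T -> T -> R) : R * (T -> R) :=
  epsilon (inhabits (0, fun _ => 0)) (fun p => is_PF A p.1 p.2).
Definition PF_eig (T : finType) (A : T -> T -> R) : R := (PF_pair A).1.
Definition PF_vec (T : finType) (A : T -> T -> R) : T -> R := (PF_pair A).2.

Fixpoint chainp (T : Type) (W : T -> T -> R) (prev : T) (s : seq T) : R :=
  match s with
  | [::] => 1
  | y :: r => W y prev * chainp W y r
  end.
Definition mprob (T : Type) (P1 : T -> R) (W : T -> T -> R) (s : seq T) : R :=
  match s with
  | [::] => 1
  | x :: r => P1 x * chainp W x r
  end.

Section Source.
Variables (M : finType) (Ws : M -> M -> R) (PM1 : M -> R).
Definition As (th : R) : M -> M -> R := fun m m' => rpow0 (Ws m m') (1 - th).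
(* theta H^{W_s}_{1-theta}(M) *)
Definition thHs (th : R) : R := ln (PF_eig (As th)).
Definition ws (th : R) (m : M) : R := rpow0 (PM1 m) (1 - th).
Definition dbar_s (th : R) : R := ln (rsum (fun m => PF_vec (As th) m * ws th m)).
Definition dund_s (th : R) : R := dbar_s th - ln (rmax (PF_vec (As th))).
End Source.

Section Chan.
Variables (X : finZmodType) (Z : finType) (Wc : (X * Z)%type -> (X * Z)%type -> R)
          (PXZ1 : (X * Z)%type -> R).
Definition assumption1 : Prop :=
  forall (z z' : Z) (x1 x2 : X),
    rsum (fun x : X => Wc (x, z) (x1, z')) = rsum (fun x : X => Wc (x, z) (x2, z')).
Definition WcZ (z z' : Z) : R := rsum (fun x : X => Wc (x, z) (GRing.zero : X, z')).
Definition Ac (th : R) : (X * Z)%type -> (X * Z)%type -> R :=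
  fun y y' => rpow0 (Wc y y') (1 - th) * rpow0 (WcZ y.2 y'.2) th.
(* theta H^{W_c, down}_{1-theta}(X|Z) *)
Definition thHc (th : R) : R := ln (PF_eig (Ac th)).
Definition PZ1 (z : Z) : R := rsum (fun x : X => PXZ1 (x, z)).
Definition wc (th : R) (y : (X * Z)%type) : R :=
  rpow0 (PXZ1 y) (1 - th) * rpow0 (PZ1 y.2) th.
Definition dbar_c (th : R) : R := ln (rsum (fun y => PF_vec (Ac th) y * wc th y)).
Definition dund_c (th : R) : R := dbar_c th - ln (rmax (PF_vec (Ac th))).
(* additive noise: output x^n minus input x~^n, together with z^n *)
Definition noise (xt : seq X) (y : seq (X * Z)) : seq (X * Z) :=
  [seq (GRing.add p.2.1 (GRing.opp p.1), p.2.2) | p <- zip xt y].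
End Chan.

Definition Ufun (M : finType) (Ws : M -> M -> R) (X : finZmodType) (Z : finType)
  (Wc : (X * Z)%type -> (X * Z)%type -> R) (r th : R) : R :=
  r * thHs Ws th + thHc Wc th.

Definition err_prob (M : finType) (Ws : M -> M -> R) (PM1 : M -> R)
  (X : finZmodType) (Z : finType) (Wc : (X * Z)%type -> (X * Z)%type -> R)
  (PXZ1 : (X * Z)%type -> R) (k n : nat)
  (e : k.-tuple M -> n.-tuple X) (d : n.-tuple (X * Z) -> k.-tuple M) : R :=
  rsum (fun mk : k.-tuple M =>
    mprob PM1 Ws mk *
    rsum (fun y : n.-tuple (X * Z) =>
      mprob PXZ1 Wc (noise (e mk) y) * (if d y == mk then 0 else 1))).

Definition delta1 (M : finType) (Ws : M -> M -> R) (PM1 : M -> R)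
  (X : finZmodType) (Z : finType) (Wc : (X * Z)%type -> (X * Z)%type -> R)
  (PXZ1 : (X * Z)%type -> R) (s rho : R) : R :=
  - (dbar_s Ws PM1 ((1 + s) * rho) + dbar_c Wc PXZ1 ((1 + s) * rho)) / (1 + s)
  + dund_s Ws PM1 rho + dund_c Wc PXZ1 rho.

Definition delta2 (M : finType) (Ws : M -> M -> R) (PM1 : M -> R)
  (X : finZmodType) (Z : finType) (Wc : (X * Z)%type -> (X * Z)%type -> R)
  (PXZ1 : (X * Z)%type -> R) (Rate th0 rho : R) : R :=
  ((1 - rho) * (dbar_s Ws PM1 th0 + dbar_c Wc PXZ1 th0)
   - (1 - th0) * (dund_s Ws PM1 rho + dund_c Wc PXZ1 rho)
   + (rho - th0) * Rate) / (1 - th0).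

(* Main.v *)
Require Import Defs.
From HB Require Import structures.
From mathcomp Require Import all_boot all_order all_algebra.
From Stdlib Require Import Reals Lra Lia ClassicalEpsilon.
Set Implicit Arguments. Unset Strict Implicit. Unset Printing Implicit Defensive.
Open Scope R_scope.


Lemma Rplus_assoc' : associative Rplus. Proof. move=> a b c; ring. Qed.
Lemma Rplus_0_l' : left_id 0 Rplus. Proof. move=> a; ring. Qed.
Lemma Rplus_comm' : commutative Rplus. Proof. move=> a b; ring. Qed.
HB.instance Definition _ := Monoid.isComLaw.Build R 0 Rplus Rplus_assoc' Rplus_comm' Rplus_0_l'.

Section RS.
Variable T : finType.
Implicit Types F G : T -> R.

Lemma rsum_seq_le (s : seq T) F G : (forall i, F i <= G i) ->
  \big[Rplus/0]_(i <- s) F i <= \big[Rplus/0]_(i <- s) G i.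
Proof.
move=> H; elim: s => [|x s IH]; first by rewrite !big_nil; lra.
rewrite !big_cons; have := H x; lra.
Qed.

Lemma rsum_le F G : (forall i, F i <= G i) -> rsum F <= rsum G.
Proof. exact: rsum_seq_le. Qed.

Lemma rsum_ext F G : (forall i, F i = G i) -> rsum F = rsum G.
Proof. by move=> H; apply: eq_bigr => i _. Qed.

Lemma rsum_ge0 F : (forall i, 0 <= F i) -> 0 <= rsum F.
Proof.
move=> H; have : rsum (fun _ : T => 0) <= rsum F by apply: rsum_le.
suff -> : rsum (fun _ : T => 0) = 0 by [].
by rewrite /rsum big1.
Qed.

Lemma rsum_add F G : rsum (fun i => F i + G i) = rsum F + rsum G.
Proof. by rewrite /rsum big_split. Qed.

Lemma rsum_seq_mull (s : seq T) c F :
  \big[Rplus/0]_(i <- s) (c * F i) = c * \big[Rplus/0]_(i <- s) F i.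
Proof.
elim: s => [|x s IH]; first by rewrite !big_nil; ring.
by rewrite !big_cons IH; ring.
Qed.

Lemma rsum_mull c F : rsum (fun i => c * F i) = c * rsum F.
Proof. exact: rsum_seq_mull. Qed.

Lemma rsum_mulr c F : rsum (fun i => F i * c) = rsum F * c.
Proof. rewrite Rmult_comm -rsum_mull; apply: rsum_ext => i; ring. Qed.

Lemma rsum_opp F : rsum (fun i => - F i) = - rsum F.
Proof.
rewrite (rsum_ext (G := fun i => (-1) * F i)); last by move=> i; ring.
rewrite rsum_mull; ring.
Qed.

Lemma rsum_sub F G : rsum (fun i => F i - G i) = rsum F - rsum G.
Proof. by rewrite /Rminus -rsum_opp -rsum_add. Qed.

Lemma rsum_term F i : (forall j, 0 <= F j) -> F i <= rsum F.
Proof.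
move=> H; rewrite /rsum (bigD1 i) //=.
have : 0 <= \big[Rplus/0]_(j | j != i) F j.
  elim/big_rec: _ => [|j x _ Hx]; [lra| have := H j; lra].
lra.
Qed.

Lemma rsum_pos F i : (forall j, 0 <= F j) -> 0 < F i -> 0 < rsum F.
Proof. move=> H Hi; have := rsum_term i H; lra. Qed.

Lemma rsum_pos_ex F : 0 < rsum F -> exists i, 0 < F i.
Proof.
move=> H; apply: NNPP => Hn.
have : rsum F <= 0.
  have -> : 0 = rsum (fun _ : T => 0) by rewrite /rsum big1.
  apply: rsum_le => i; apply: Rnot_lt_le => Hi; apply: Hn; by exists i.
lra.
Qed.

Lemma rsum_const c : rsum (fun _ : T => c) = INR #|T| * c.
Proof.
rewrite /rsum big_const.
elim: #|T| => [|m IH]; first by rewrite /=; ring.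
by rewrite iterS IH S_INR; ring.
Qed.

Lemma rsum_swap (U : finType) (F : T -> U -> R) :
  rsum (fun i => rsum (fun j => F i j)) = rsum (fun j => rsum (fun i => F i j)).
Proof. exact: exchange_big. Qed.

Lemma rsum_pair (U : finType) (F : T * U -> R) :
  rsum F = rsum (fun i => rsum (fun j => F (i, j))).
Proof. by rewrite /rsum pair_big /=; apply: eq_bigr => -[]. Qed.

Lemma rsum_reindex_inj (h : T -> T) F : injective h -> rsum (fun i => F (h i)) = rsum F.
Proof. move=> Hh; rewrite /rsum; symmetry; exact: (@reindex_inj R Rplus 0 T h xpredT F Hh). Qed.

Lemma rsum_ind1 F (j : T) : rsum (fun i => if i == j then F i else 0) = F j.
Proof.
rewrite /rsum (bigD1 j) //= eqxx big1 ?Rplus_0_r // => i /negbTE -> //.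
Qed.

Lemma ex_argmin_seq F (s : seq T) x : exists i, i \in x :: s /\ forall j, j \in x :: s -> F i <= F j.
Proof.
elim: s x => [|y s IH] x.
  by exists x; split; [rewrite inE eqxx| move=> j; rewrite inE => /eqP ->; lra].
have [i [Hi Hm]] := IH y.
case: (Rle_dec (F x) (F i)) => Hx.
  exists x; split; first by rewrite inE eqxx.
  move=> j; rewrite inE => /orP [/eqP -> | /Hm]; lra.
exists i; split; first by rewrite inE Hi orbT.
move=> j; rewrite inE => /orP [/eqP -> | /Hm]; lra.
Qed.

Lemma ex_argmin (x0 : T) F : exists i, forall j, F i <= F j.
Proof.
have [i [_ Hi]] := ex_argmin_seq F (enum T) x0.
by exists i => j; apply: Hi; rewrite inE mem_enum orbT.
Qed.

Lemma ex_argmax (x0 : T) F : exists i, forall j, F j <= F i.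
Proof.
have [i Hi] := ex_argmin x0 (fun j => - F j).
by exists i => j; have := Hi j; lra.
Qed.
End RS.


Lemma rpow0_ge0 a t : 0 <= rpow0 a t.
Proof. rewrite /rpow0; case: Rlt_dec => Ha; [apply: Rlt_le; exact: exp_pos | apply: Rle_refl]. Qed.
Lemma rpow0_pos a t : 0 < a -> rpow0 a t = exp (t * ln a).
Proof. by rewrite /rpow0; case: Rlt_dec. Qed.
Lemma rpow0_gt0 a t : 0 < a -> 0 < rpow0 a t.
Proof. move=> H; rewrite rpow0_pos //; exact: exp_pos. Qed.
Lemma rpow0_eq0 a t : a <= 0 -> rpow0 a t = 0.
Proof. move=> ?; rewrite /rpow0; case: Rlt_dec => Ha //; lra. Qed.
Lemma rpow0_gt0_inv a t : 0 < rpow0 a t -> 0 < a.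
Proof. rewrite /rpow0; case: Rlt_dec => Ha H //=; simpl in H; lra. Qed.
Lemma rpow0_mul a b t : 0 <= a -> 0 <= b -> rpow0 (a * b) t = rpow0 a t * rpow0 b t.
Proof.
move=> Ha Hb.
case: (Rle_lt_or_eq_dec _ _ Ha) => Ha'.
2: by rewrite -Ha' Rmult_0_l (@rpow0_eq0 0) ?Rmult_0_l //; apply: Rle_refl.
case: (Rle_lt_or_eq_dec _ _ Hb) => Hb'.
2: by rewrite -Hb' Rmult_0_r (@rpow0_eq0 0) ?Rmult_0_r //; apply: Rle_refl.
rewrite !rpow0_pos //; last exact: Rmult_lt_0_compat.
by rewrite ln_mult // -exp_plus; f_equal; ring.
Qed.
Lemma rpow0_1 t : rpow0 1 t = 1.
Proof. by rewrite rpow0_pos ?ln_1 ?Rmult_0_r ?exp_0 //; lra. Qed.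

Section Chain.
Variable T : finType.

Lemma chainp_ge0 (W : T -> T -> R) p (s : seq T) :
  (forall a b, 0 <= W a b) -> 0 <= chainp W p s.
Proof.
move=> H; elim: s p => [|y s IH] p /=; first lra.
apply: Rmult_le_pos; [exact: H| exact: IH].
Qed.

Lemma mprob_ge0 (w : T -> R) (W : T -> T -> R) (s : seq T) :
  (forall a, 0 <= w a) -> (forall a b, 0 <= W a b) -> 0 <= mprob w W s.
Proof.
move=> Hw H; case: s => [|x s] /=; first lra.
apply: Rmult_le_pos; [exact: Hw| exact: chainp_ge0].
Qed.

Lemma chainp_rpow (W : T -> T -> R) p s t : (forall a b, 0 <= W a b) ->
  rpow0 (chainp W p s) t = chainp (fun a b => rpow0 (W a b) t) p s.
Proof.
move=> H; elim: s p => [|y s IH] p /=; first exact: rpow0_1.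
rewrite rpow0_mul; [by rewrite IH| exact: H| exact: chainp_ge0].
Qed.

Lemma mprob_rpow (w : T -> R) (W : T -> T -> R) s t :
  (forall a, 0 <= w a) -> (forall a b, 0 <= W a b) ->
  rpow0 (mprob w W s) t = mprob (fun a => rpow0 (w a) t) (fun a b => rpow0 (W a b) t) s.
Proof.
move=> Hw H; case: s => [|x s] /=; first exact: rpow0_1.
rewrite rpow0_mul; [by rewrite chainp_rpow| exact: Hw| exact: chainp_ge0].
Qed.

Lemma chainp_mul (f g : T -> T -> R) p s :
  chainp (fun a b => f a b * g a b) p s = chainp f p s * chainp g p s.
Proof. elim: s p => [|y s IH] p /=; first ring. by rewrite IH; ring. Qed.

Lemma mprob_mul (w1 w2 : T -> R) (f g : T -> T -> R) s :
  mprob (fun a => w1 a * w2 a) (fun a b => f a b * g a b) s = mprob w1 f s * mprob w2 g s.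
Proof. case: s => [|x s] /=; first ring. by rewrite chainp_mul; ring. Qed.

Lemma rsum_tuple_cons N (F : N.+1.-tuple T -> R) :
  rsum F = rsum (fun x => rsum (fun t : N.-tuple T => F [tuple of x :: t])).
Proof.
rewrite -(rsum_pair (fun p : T * N.-tuple T => F [tuple of p.1 :: p.2])).
rewrite /rsum (@reindex R Rplus 0 _ _ (fun p : T * N.-tuple T => [tuple of p.1 :: p.2])) //.
apply: onW_bij.
exists (fun u : N.+1.-tuple T => (thead u, [tuple of behead u])).
  by move=> [x t] /=; rewrite theadE; congr pair; apply: val_inj.
by move=> u /=; rewrite [RHS]tuple_eta.
Qed.

Definition Sch (W : T -> T -> R) N p := rsum (fun t : N.-tuple T => chainp W p t).

Lemma Sch0 W p : Sch W 0 p = 1.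
Proof.
rewrite /Sch (rsum_ext (G := fun _ => 1)); last by move=> t; rewrite tuple0.
by rewrite rsum_const card_tuple expn0 /=; ring.
Qed.

Lemma SchS W N p : Sch W N.+1 p = rsum (fun y => W y p * Sch W N y).
Proof.
rewrite /Sch rsum_tuple_cons; apply: rsum_ext => y /=.
by rewrite rsum_mull.
Qed.

Lemma rsum_mprob (w : T -> R) W N :
  rsum (fun t : N.+1.-tuple T => mprob w W t) = rsum (fun x => w x * Sch W N x).
Proof.
rewrite rsum_tuple_cons; apply: rsum_ext => x /=.
by rewrite /Sch rsum_mull.
Qed.

Lemma rmax_seq_ge (v : T -> R) (s : seq T) p : p \in s -> v p <= \big[Rmax/0]_(i <- s) v i.
Proof.
elim: s => [//|x s IH]; rewrite inE big_cons => /orP [/eqP -> | /IH H].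
  exact: Rmax_l.
apply: Rle_trans H _; exact: Rmax_r.
Qed.

Lemma rmax_ge (v : T -> R) p : v p <= rmax v.
Proof. by apply: rmax_seq_ge; rewrite /index_enum -enumT mem_enum. Qed.

Lemma Sch_ge0 W N p : (forall a b, 0 <= W a b) -> 0 <= Sch W N p.
Proof. move=> H; apply: rsum_ge0 => t; exact: chainp_ge0. Qed.

Lemma Sch_PF_le (A : T -> T -> R) lam v N p : (forall a b, 0 <= A a b) -> is_PF A lam v ->
  Sch A N p <= lam ^ N * v p.
Proof.
move=> H [Hl [Hv [_ He]]]; elim: N p => [|N IH] p.
  by rewrite Sch0 /=; have := Hv p; lra.
rewrite SchS.
apply: (Rle_trans _ (rsum (fun y => A y p * (lam ^ N * v y)))).
  apply: rsum_le => y; apply: Rmult_le_compat_l; [exact: H| exact: IH].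
right; rewrite (rsum_ext (G := fun y => (lam ^ N) * (v y * A y p))).
  rewrite rsum_mull He /=; ring.
move=> y; ring.
Qed.

Lemma Sch_PF_ge (A : T -> T -> R) lam v N p : (forall a b, 0 <= A a b) -> is_PF A lam v ->
  lam ^ N * v p / rmax v <= Sch A N p.
Proof.
move=> H [Hl [Hv [_ He]]].
have Hm : 0 < rmax v by have := rmax_ge v p; have := Hv p; lra.
elim: N p => [|N IH] p.
  rewrite Sch0 /=; have := rmax_ge v p; have := Hv p => ? ?. apply: (Rmult_le_reg_r (rmax v)) => //. rewrite /Rdiv Rmult_assoc Rinv_l; lra.
rewrite SchS.
apply: (Rle_trans _ (rsum (fun y => A y p * (lam ^ N * v y / rmax v)))).
  right; rewrite (rsum_ext (G := fun y => (lam ^ N / rmax v) * (v y * A y p))).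
    rewrite rsum_mull He /=; field; lra.
  move=> y; field; lra.
apply: rsum_le => y; apply: Rmult_le_compat_l; [exact: H| exact: IH].
Qed.

End Chain.


Lemma Rdiv_le_l a b c : 0 < c -> a <= b * c -> a / c <= b.
Proof. move=> Hc H; apply: (Rmult_le_reg_r c) => //; rewrite /Rdiv Rmult_assoc Rinv_l; lra. Qed.
Lemma Rdiv_ge_l a b c : 0 < c -> b * c <= a -> b <= a / c.
Proof. move=> Hc H; apply: (Rmult_le_reg_r c) => //; rewrite /Rdiv Rmult_assoc Rinv_l; lra. Qed.

Lemma Un_cv_ext (u v : nat -> R) l : (forall n, u n = v n) -> Un_cv u l -> Un_cv v l.
Proof. move=> E H eps He; have [N HN] := H eps He; exists N => n Hn; rewrite -E; exact: HN. Qed.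

Lemma Un_cv_S (u : nat -> R) l : Un_cv u l -> Un_cv (fun n => u n.+1) l.
Proof. move=> H eps He; have [N HN] := H eps He; exists N => n Hn; apply: HN; lia. Qed.

Lemma Un_cv_ge (u : nat -> R) l c : (forall n, c <= u n) -> Un_cv u l -> c <= l.
Proof.
move=> Hc H; apply: Rnot_lt_le => Hl.
have [N HN] := H (c - l) ltac:(lra).
have := HN N (le_n N); rewrite /R_dist => /Rabs_def2 [? ?]; have := Hc N; lra.
Qed.

Lemma CV_cst c : Un_cv (fun _ => c) c.
Proof. move=> eps He; exists 0%nat => n _; rewrite /R_dist Rminus_eq_0 Rabs_R0; lra. Qed.

Section CVsum.
Variable T : finType.
Lemma cv_rsum (u : nat -> T -> R) (l : T -> R) (c : T -> R) :
  (forall i, Un_cv (fun t => u t i) (l i)) ->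
  Un_cv (fun t => rsum (fun i => u t i * c i)) (rsum (fun i => l i * c i)).
Proof.
move=> H; rewrite /rsum.
elim: (index_enum T) => [|x s IH].
  apply: (Un_cv_ext (u := fun _ => 0)); first by move=> n; rewrite big_nil.
  rewrite big_nil; exact: CV_cst.
rewrite big_cons.
apply: (Un_cv_ext (u := fun t => u t x * c x + \big[Rplus/0]_(i <- s) (u t i * c i))).
  by move=> n; rewrite big_cons.
apply: CV_plus => //; apply: CV_mult => //; exact: CV_cst.
Qed.
End CVsum.

Section Wosc.
Variable T : finType.
Lemma wosc (x0 : T) (a b r : T -> R) kap Dl : (forall i, 0 <= a i) -> (forall i, 0 <= b i) ->
  rsum a = 1 -> rsum b = 1 -> kap <= rsum (fun i => Rmin (a i) (b i)) ->
  (forall i i', r i - r i' <= Dl) ->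
  rsum (fun i => a i * r i) - rsum (fun i => b i * r i) <= (1 - kap) * Dl.
Proof.
move=> Ha Hb Sa Sb Hk Hr.
have [i0 Hi0] := ex_argmin x0 r.
have Dl0 : 0 <= Dl by have := Hr i0 i0; lra.
have -> : rsum (fun i => a i * r i) - rsum (fun i => b i * r i) =
          rsum (fun i => (a i - b i) * (r i - r i0)).
  rewrite (rsum_ext (F := fun i => (a i - b i) * (r i - r i0))
     (G := fun i => (a i * r i - b i * r i) - (a i - b i) * r i0)); last by move=> i; ring.
  rewrite rsum_sub rsum_sub rsum_mulr rsum_sub Sa Sb; ring.
apply: (Rle_trans _ (rsum (fun i => (a i - Rmin (a i) (b i)) * Dl))).
  apply: rsum_le => i; have := Hi0 i; have := Hr i i0; have := Ha i; have := Hb i.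
  rewrite /Rmin; case: Rle_dec => H1 *; nra.
rewrite rsum_mulr rsum_sub Sa; nra.
Qed.
End Wosc.

Section Power.
Variables (T : finType) (j0 : T) (C : T -> T -> R).
Hypothesis Cpos : forall i j, 0 < C i j.

Definition Cy (u : T -> R) j := rsum (fun i => u i * C i j).

Fixpoint yit (t : nat) : T -> R :=
  match t with O => fun _ => 1 | S t' => fun j => Cy (yit t') j / Cy (yit t') j0 end.

Lemma PowerIt : exists (y : T -> R) mu, (forall i, 0 < y i) /\
  forall j, rsum (fun i => y i * C i j) = mu * y j.
Proof.
have [pm Hpm] := ex_argmin (j0, j0) (fun p : T * T => C p.1 p.2).
have [pM HpM] := ex_argmax (j0, j0) (fun p : T * T => C p.1 p.2).
set cmin := C pm.1 pm.2 in Hpm; set cmax := C pM.1 pM.2 in HpM.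
have cmin0 : 0 < cmin by apply: Cpos.
have cmaxmin : cmin <= cmax by have := HpM pm.
have Cmin i j : cmin <= C i j by have := Hpm (i, j).
have Cmax i j : C i j <= cmax by have := HpM (i, j).
set kap := cmin / cmax.
have kap0 : 0 < kap by rewrite /kap; apply: Rdiv_lt_0_compat; lra.
have kap1 : kap <= 1 by rewrite /kap; apply: Rdiv_le_l; lra.
have Cyb u j : (forall i, 0 <= u i) -> cmin * rsum u <= Cy u j <= cmax * rsum u.
  move=> Hu; rewrite /Cy -!rsum_mull; split; apply: rsum_le => i.
    have := Hu i; have := Cmin i j; nra.
  have := Hu i; have := Cmax i j; nra.
have Cypos u j : (forall i, 0 < u i) -> 0 < Cy u j.
  move=> Hu; apply: (rsum_pos (i := j)).
    move=> i; apply: Rmult_le_pos; [apply: Rlt_le; exact: Hu| apply: Rlt_le; exact: Cpos].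
  apply: Rmult_lt_0_compat; [exact: Hu| exact: Cpos].
have ypos : forall t i, 0 < yit t i.
  elim=> [|t IH] i /=; first lra.
  apply: Rdiv_lt_0_compat; exact: Cypos.
have yj0 : forall t, yit t j0 = 1.
  case=> [|t] //=; rewrite /Rdiv Rinv_r //; apply: Rgt_not_eq; exact: Cypos.
have ikap : 1 <= / kap.
  apply: (Rmult_le_reg_r kap) => //; rewrite Rinv_l; lra.
have kapmax : kap * cmax = cmin by rewrite /kap; field; lra.
have yb : forall t i, kap <= yit t i <= / kap.
  case=> [|t] i /=; first lra.
  have Hu : forall i, 0 <= yit t i by move=> l; apply: Rlt_le.
  have S0 : 0 < rsum (yit t) by apply: (rsum_pos (i := i)) => //.
  have [h1 h2] := Cyb _ i Hu; have [h3 h4] := Cyb _ j0 Hu.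
  have c0 : 0 < Cy (yit t) j0 by exact: Cypos.
  split.
    apply: Rdiv_ge_l => //; nra.
  apply: Rdiv_le_l => //.
  apply: (Rle_trans _ (cmax * rsum (yit t))) => //.
  have -> : cmax * rsum (yit t) = / kap * (cmin * rsum (yit t)) by rewrite -kapmax; field; lra.
  apply: Rmult_le_compat_l => //; lra.
pose r t j := Cy (yit t) j / yit t j.
pose D := INR #|T| * cmax.
pose q := 1 - kap.
have q0 : 0 <= q by rewrite /q; lra.
have q1 : q < 1 by rewrite /q; lra.
have osc : forall t j k, r t j - r t k <= D * q ^ t.
  elim=> [|t IH] j k.
    rewrite /r /= /D /Rdiv Rinv_1 !Rmult_1_r.
    have : 0 <= Cy (fun _ => 1) k by apply: rsum_ge0 => i; have := Cpos i k; lra.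
    have : Cy (fun _ => 1) j <= INR #|T| * cmax.
      rewrite -rsum_const; apply: rsum_le => i; have := Cmax i j; lra.
    lra.
  set u := yit t.
  have Hu : forall i, 0 < u i by move=> l; exact: ypos.
  have S0 : 0 < rsum u by apply: (rsum_pos (i := j)) => // l; apply: Rlt_le.
  pose w j i := u i * C i j / Cy u j.
  have rS : forall j, r t.+1 j = rsum (fun i => w j i * r t i).
    move=> l; rewrite /r /w /=.
    have cl : 0 < Cy u l by exact: Cypos.
    have c0 : 0 < Cy u j0 by exact: Cypos.
    have E1 : Cy (fun j => Cy u j / Cy u j0) l = / Cy u j0 * rsum (fun i => Cy u i * C i l).
      rewrite -rsum_mull; apply: rsum_ext => i; rewrite /Rdiv; ring.
    have E2 : rsum (fun i => u i * C i l / Cy u l * (Cy u i / u i)) = / Cy u l * rsum (fun i => Cy u i * C i l).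
      rewrite -rsum_mull; apply: rsum_ext => i; have := Hu i; move=> ?; field; split; lra.
    rewrite E1 E2 -/u; field; split; lra.
  have wsum : forall j, rsum (w j) = 1.
    move=> l; rewrite /w (rsum_ext (G := fun i => / Cy u l * (u i * C i l))); last by move=> i; rewrite /Rdiv; ring.
    rewrite rsum_mull -/(Cy u l); field; apply: Rgt_not_eq; exact: Cypos.
  have wge : forall j i, u i * (cmin / (cmax * rsum u)) <= w j i.
    move=> l i; rewrite /w.
    have cl : 0 < Cy u l by exact: Cypos.
    have [_ h2] := Cyb u l (fun i => Rlt_le _ _ (Hu i)).
    have := Hu i; have := Cmin i l => ? ?.
    apply: Rdiv_ge_l => //.
    apply: (Rle_trans _ (u i * (cmin / (cmax * rsum u)) * (cmax * rsum u))).
      apply: Rmult_le_compat_l => //; apply: Rmult_le_pos; try lra.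
      apply: Rlt_le; apply: Rdiv_lt_0_compat; nra.
    have -> : u i * (cmin / (cmax * rsum u)) * (cmax * rsum u) = u i * cmin by field; nra.
    nra.
  rewrite !rS.
  have -> : D * q ^ t.+1 = (1 - kap) * (D * q ^ t) by rewrite /q /=; ring.
  apply: (wosc j0).
  - move=> i; apply: Rlt_le; rewrite /w; apply: Rdiv_lt_0_compat; [apply: Rmult_lt_0_compat; [exact: Hu| exact: Cpos]| exact: Cypos].
  - move=> i; apply: Rlt_le; rewrite /w; apply: Rdiv_lt_0_compat; [apply: Rmult_lt_0_compat; [exact: Hu| exact: Cpos]| exact: Cypos].
  - exact: wsum.
  - exact: wsum.
  - apply: (Rle_trans _ (rsum (fun i => u i * (cmin / (cmax * rsum u))))).
      right; rewrite rsum_mulr /kap; field; nra.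
    apply: rsum_le => i; apply: Rmin_glb; exact: wge.
  - exact: IH.
pose G := / kap * D / cmin.
have G0 : 0 <= G.
  rewrite /G /D; apply: Rmult_le_pos; [apply: Rmult_le_pos; [apply: Rlt_le; exact: Rinv_0_lt_compat| apply: Rmult_le_pos; [exact: pos_INR| lra]]| apply: Rlt_le; exact: Rinv_0_lt_compat].
have ydiff : forall t i, Rabs (yit t.+1 i - yit t i) <= G * q ^ t.
  move=> t i.
  set u := yit t.
  have Hu : forall i, 0 < u i by move=> l; exact: ypos.
  have yu : u j0 = 1 := yj0 t.
  have c0 : cmin <= Cy u j0.
    have [h1 _] := Cyb u j0 (fun i => Rlt_le _ _ (Hu i)).
    have : 1 <= rsum u by rewrite -yu; apply: rsum_term => l; apply: Rlt_le.
    nra.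
  have E : yit t.+1 i - yit t i = u i * (r t i - r t j0) * / Cy u j0.
    rewrite /r /= -/u yu; have := Hu i => ?; field; split; lra.
  rewrite E Rabs_mult Rabs_mult (Rabs_right (u i)); last by apply: Rle_ge; apply: Rlt_le.
  rewrite (Rabs_right (/ Cy u j0)); last by apply: Rle_ge; apply: Rlt_le; apply: Rinv_0_lt_compat; lra.
  have hr : Rabs (r t i - r t j0) <= D * q ^ t.
    apply: Rabs_le; have := osc t i j0; have := osc t j0 i; lra.
  have hu : u i <= / kap by have := yb t i; rewrite -/u; lra.
  have hc : / Cy u j0 <= / cmin by apply: Rinv_le_contravar.
  rewrite /G.
  have -> : / kap * D / cmin * q ^ t = / kap * (D * q ^ t) * / cmin by rewrite /Rdiv; ring.
  apply: Rmult_le_compat; try apply: Rmult_le_pos; try apply: Rmult_le_compat; try lra;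
    try exact: Rabs_pos; try (apply: Rlt_le; exact: Rinv_0_lt_compat; lra); try (apply: Rlt_le; exact: Hu).
  apply: Rlt_le; apply: Rinv_0_lt_compat; lra.
have ycum : forall t d i, Rabs (yit (t + d) i - yit t i) <= G * q ^ t * (1 - q ^ d) / kap.
  move=> t d i; elim: d => [|d IH].
    rewrite addn0 Rminus_eq_0 Rabs_R0 /= Rminus_eq_0 Rmult_0_r /Rdiv Rmult_0_l; lra.
  rewrite addnS.
  apply: (Rle_trans _ (Rabs (yit (t + d).+1 i - yit (t + d) i) + Rabs (yit (t + d) i - yit t i))).
    have -> : yit (t + d).+1 i - yit t i = (yit (t + d).+1 i - yit (t + d) i) + (yit (t + d) i - yit t i) by ring.
    exact: Rabs_triang.
  apply: (Rle_trans _ (G * q ^ (t + d) + G * q ^ t * (1 - q ^ d) / kap)).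
    apply: Rplus_le_compat => //; exact: ydiff.
  right; rewrite -plusE pow_add /q /=; field; lra.
have ycum' : forall (t m : nat) i, leq t m -> Rabs (yit m i - yit t i) <= G * q ^ t / kap.
  move=> t m i Htm; rewrite -(subnKC Htm).
  apply: (Rle_trans _ _ _ (ycum t (subn m t) i)).
  have : 0 <= q ^ (subn m t) by apply: pow_le.
  have : 0 <= G * q ^ t by apply: Rmult_le_pos => //; apply: pow_le.
  move=> h1 h2; apply: Rdiv_le_l => //.
  have -> : G * q ^ t / kap * kap = G * q ^ t by field; lra.
  nra.
have Hcauchy : forall i, Cauchy_crit (fun t => yit t i).
  move=> i eps He.
  have [N HN] := pow_lt_1_zero q ltac:(rewrite Rabs_right; lra) (eps * kap / (2 * G + 1))
                   ltac:(apply: Rdiv_lt_0_compat; nra).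
  exists N => n m Hn Hm.
  have HN' := HN N (le_n N); rewrite Rabs_right in HN'; last by apply: Rle_ge; apply: pow_le.
  have h1 := ycum' N n i ltac:(apply/leP; lia).
  have h2 := ycum' N m i ltac:(apply/leP; lia).
  rewrite /R_dist.
  have -> : yit n i - yit m i = (yit n i - yit N i) - (yit m i - yit N i) by ring.
  apply: (Rle_lt_trans _ _ _ (Rabs_triang _ _)); rewrite Rabs_Ropp.
  have : G * q ^ N / kap < eps / 2.
    apply: (Rle_lt_trans _ (G * (eps * kap / (2 * G + 1)) / kap)).
      apply: Rdiv_le_l => //; have -> : G * (eps * kap / (2 * G + 1)) / kap * kap = G * (eps * kap / (2 * G + 1)) by field; lra.
      apply: Rmult_le_compat_l => //; lra.
    have -> : G * (eps * kap / (2 * G + 1)) / kap = eps * (G / (2 * G + 1)) by field; lra.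
    have : G / (2 * G + 1) < / 2.
      apply: (Rmult_lt_reg_r (2 * G + 1)); first lra.
      rewrite /Rdiv Rmult_assoc Rinv_l; lra.
    move=> hG; have := Rmult_lt_compat_l eps _ _ He hG; lra.
  lra.
pose yl := fun i => proj1_sig (R_complete _ (Hcauchy i)).
have ycv : forall i, Un_cv (fun t => yit t i) (yl i).
  move=> i; exact: (proj2_sig (R_complete _ (Hcauchy i))).
have ylpos : forall i, 0 < yl i.
  move=> i; have := @Un_cv_ge (fun t => yit t i) (yl i) kap (fun n => proj1 (yb n i)) (ycv i); lra.
exists yl, (rsum (fun i => yl i * C i j0)); split => // j.
have hb : Un_cv (fun t => Cy (yit t) j) (rsum (fun i => yl i * C i j)) by exact: cv_rsum.
have ha : Un_cv (fun t => yit t.+1 j * Cy (yit t) j0) (yl j * rsum (fun i => yl i * C i j0)).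
  apply: (CV_mult (fun t => yit t.+1 j) (fun t => Cy (yit t) j0)); [exact: (Un_cv_S (ycv j))| exact: cv_rsum].
have ha' : Un_cv (fun t => Cy (yit t) j) (yl j * rsum (fun i => yl i * C i j0)).
  apply: (Un_cv_ext _ ha) => t /=.
  have : 0 < Cy (yit t) j0 by apply: Cypos => l; exact: ypos.
  move=> ?; field; lra.
rewrite (UL_sequence _ _ _ hb ha'); ring.
Qed.
End Power.


Section PFex.
Variables (T : finType) (A : T -> T -> R).
Hypothesis Ann : forall a b, 0 <= A a b.

Lemma mpow_ge0 N i j : 0 <= mpow A N i j.
Proof.
elim: N i => [|N IH] i /=; first by case: (i == j); lra.
apply: rsum_ge0 => l; apply: Rmult_le_pos; [exact: Ann| exact: IH].
Qed.

Lemma mpow_succ_r N i j : mpow A N.+1 i j = rsum (fun l => mpow A N i l * A l j).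
Proof.
elim: N i => [|N IH] i.
  rewrite /= (rsum_ext (G := fun l => if l == j then A i l else 0)); last first.
    by move=> l; case: (l == j); ring.
  rewrite rsum_ind1 (rsum_ext (G := fun l => if l == i then A l j else 0)).
    by rewrite rsum_ind1.
  by move=> l; rewrite eq_sym; case: (l == i); ring.
have -> : mpow A N.+2 i j = rsum (fun l => A i l * mpow A N.+1 l j) by [].
rewrite (rsum_ext (G := fun l => rsum (fun m => A i l * mpow A N l m * A m j))); last first.
  by move=> l; rewrite IH -rsum_mull; apply: rsum_ext => m; ring.
rewrite rsum_swap; apply: rsum_ext => m.
by rewrite rsum_mulr.
Qed.

Hypothesis Airr : irreducible A.

Lemma PF_exists (j0 : T) : exists lam v, is_PF A lam v.
Proof.
have Hirr : forall p : T * T, exists N, leq 1 N /\ 0 < mpow A N p.1 p.2.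
  by move=> p; have := Airr p.1 p.2.
pose Nf (p : T * T) := epsilon (inhabits 0%nat) (fun N => leq 1 N /\ 0 < mpow A N p.1 p.2).
have HNf : forall p, leq 1 (Nf p) /\ 0 < mpow A (Nf p) p.1 p.2.
  move=> p; exact: (epsilon_spec (inhabits 0%nat) (fun N => leq 1 N /\ 0 < mpow A N p.1 p.2) (Hirr p)).
pose K := \big[maxn/0%nat]_(p : T * T) Nf p.
pose C i j := rsum (fun m : 'I_K.+1 => mpow A m i j).
have Cpos : forall i j, 0 < C i j.
  move=> i j.
  have Hlt : leq (Nf (i, j)).+1 K.+1 by rewrite ltnS; exact: (@leq_bigmax _ Nf (i, j)).
  apply: (rsum_pos (i := Ordinal Hlt)).
    move=> m; exact: mpow_ge0.
  exact: (proj2 (HNf (i, j))).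
have Comm : forall l j, rsum (fun i => A l i * C i j) = rsum (fun i => C l i * A i j).
  move=> l j; rewrite /C.
  rewrite (rsum_ext (F := fun i => A l i * rsum (fun m : 'I_K.+1 => mpow A m i j))
                    (G := fun i => rsum (fun m : 'I_K.+1 => A l i * mpow A m i j))); last by move=> i; rewrite rsum_mull.
  rewrite (rsum_ext (F := fun i => rsum (fun m : 'I_K.+1 => mpow A m l i) * A i j)
                    (G := fun i => rsum (fun m : 'I_K.+1 => mpow A m l i * A i j))); last by move=> i; rewrite rsum_mulr.
  rewrite rsum_swap (rsum_swap (fun i (m : 'I_K.+1) => mpow A m l i * A i j)).
  apply: rsum_ext => m; by rewrite -mpow_succ_r.
have [y [mu [ypos yeig]]] := PowerIt j0 Cpos.
pose x j := rsum (fun i => y i * A i j).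
have xge : forall j, 0 <= x j.
  move=> j; apply: rsum_ge0 => i; apply: Rmult_le_pos; [apply: Rlt_le; exact: ypos| exact: Ann].
have xC : forall k, rsum (fun j => x j * C j k) = mu * x k.
  move=> k.
  rewrite (rsum_ext (F := fun j => x j * C j k) (G := fun j => rsum (fun i => y i * (A i j * C j k)))); last first.
    by move=> j; rewrite /x -rsum_mulr; apply: rsum_ext => i; ring.
  rewrite rsum_swap.
  rewrite (rsum_ext (G := fun i => y i * rsum (fun j => C i j * A j k))); last first.
    by move=> i; rewrite rsum_mull Comm.
  rewrite (rsum_ext (F := fun i => y i * rsum (fun j => C i j * A j k)) (G := fun i => rsum (fun j => y i * C i j * A j k))); last first.
    by move=> i; rewrite -rsum_mull; apply: rsum_ext => j; ring.
  rewrite rsum_swap /x -rsum_mull; apply: rsum_ext => j.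
  by rewrite rsum_mulr yeig; ring.
have [l xl] : exists l, 0 < x l.
  have [N [HN1 HN2]] := Airr j0 j0.
  case: N HN1 HN2 => [//|N] _ /= /rsum_pos_ex [l Hl].
  exists l; apply: (Rlt_le_trans _ (y j0 * A j0 l)).
    apply: Rmult_lt_0_compat; first exact: ypos.
    case: (Rle_lt_or_eq_dec _ _ (Ann j0 l)) => // E; rewrite -E Rmult_0_l in Hl; lra.
  apply: (rsum_term (F := fun i => y i * A i l)) => i.
  apply: Rmult_le_pos; [apply: Rlt_le; exact: ypos| exact: Ann].
have [j1 Hj1] := ex_argmin j0 (fun j => x j / y j).
set c := x j1 / y j1.
pose z j := x j - c * y j.
have zge : forall j, 0 <= z j.
  move=> j; have := Hj1 j; rewrite /z -/c => H.
  have yj := ypos j.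
  have : c * y j <= x j / y j * y j by apply: Rmult_le_compat_r => //; lra.
  have -> : x j / y j * y j = x j by field; lra.
  lra.
have zj1 : z j1 = 0 by rewrite /z /c; field; have := ypos j1; lra.
have zC : forall k, rsum (fun j => z j * C j k) = mu * z k.
  move=> k; rewrite /z (rsum_ext (G := fun j => x j * C j k - c * (y j * C j k))); last by move=> j; ring.
  by rewrite rsum_sub rsum_mull xC yeig; ring.
have z0 : forall l, z l = 0.
  move=> l'; apply: NNPP => Hz.
  have Hzl : 0 < z l' by have := zge l'; lra.
  have : 0 < rsum (fun j => z j * C j j1).
    apply: (rsum_pos (i := l')).
      move=> j; apply: Rmult_le_pos; [exact: zge| apply: Rlt_le; exact: Cpos].
    apply: Rmult_lt_0_compat => //; exact: Cpos.
  rewrite zC zj1; lra.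
have xcy : forall j, x j = c * y j by move=> j; have := z0 j; rewrite /z; lra.
have c0 : 0 < c.
  apply: NNPP => Hc; have := xcy l; have := ypos l => ? ?.
  have : c * y l <= 0 by nra.
  lra.
have [j2 Hj2] := ex_argmin j0 y.
exists c, (fun i => y i / y j2).
have y2 := ypos j2.
split => //; split.
  by move=> i; apply: Rdiv_ge_l => //; rewrite Rmult_1_l; exact: Hj2.
split; first by exists j2; field; lra.
move=> j; rewrite (rsum_ext (G := fun i => / y j2 * (y i * A i j))); last by move=> i; rewrite /Rdiv; ring.
rewrite rsum_mull -/(x j) xcy; rewrite /Rdiv; ring.
Qed.

Lemma PF_spec (j0 : T) : is_PF A (PF_eig A) (PF_vec A).
Proof.
have [lam [v H]] := PF_exists j0.
rewrite /PF_eig /PF_vec /PF_pair.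
exact: (epsilon_spec _ (fun p => is_PF A p.1 p.2) (ex_intro _ (lam, v) H)).
Qed.
End PFex.


Lemma exp_le x y : x <= y -> exp x <= exp y.
Proof. case=> H; [left; exact: exp_increasing| right; by rewrite H]. Qed.
Lemma exp_le_inv x y : exp x <= exp y -> x <= y.
Proof. move=> H; apply: Rnot_lt_le => H'; have := exp_increasing _ _ H'; lra. Qed.
Lemma ln_le x y : 0 < x -> x <= y -> ln x <= ln y.
Proof. move=> Hx; case=> H; [left; exact: ln_increasing| right; by rewrite H]. Qed.
Lemma ln_div x y : 0 < x -> 0 < y -> ln (x / y) = ln x - ln y.
Proof.
move=> Hx Hy; rewrite /Rdiv ln_mult //; last exact: Rinv_0_lt_compat.
rewrite ln_Rinv //; ring.
Qed.
Lemma Rdiv_le_0_compat a b : 0 <= a -> 0 < b -> 0 <= a / b.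
Proof. move=> Ha Hb; apply: Rmult_le_pos => //; apply: Rlt_le; exact: Rinv_0_lt_compat. Qed.

Lemma exp_tangent u m : exp m * (1 + u - m) <= exp u.
Proof.
have E : exp u = exp m * exp (u - m) by rewrite -exp_plus; f_equal; ring.
have := exp_ineq1_le (u - m); have := exp_pos m; rewrite E; nra.
Qed.

Lemma young x y a : 0 < x -> 0 < y -> 0 < a < 1 ->
  exp (a * ln x + (1 - a) * ln y) <= a * x + (1 - a) * y.
Proof.
move=> Hx Hy Ha; set m := a * ln x + (1 - a) * ln y.
have h1 := exp_tangent (ln x) m; have h2 := exp_tangent (ln y) m.
rewrite exp_ln // in h1; rewrite exp_ln // in h2.
have : exp m = a * (exp m * (1 + ln x - m)) + (1 - a) * (exp m * (1 + ln y - m)) by rewrite /m; ring.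
nra.
Qed.

Lemma rpow0_le a b t : 0 <= a -> a <= b -> 0 <= t -> rpow0 a t <= rpow0 b t.
Proof.
move=> Ha Hab Ht.
case: (Rle_lt_or_eq_dec _ _ Ha) => Ha'.
  rewrite !rpow0_pos //; last lra.
  apply: exp_le; apply: Rmult_le_compat_l => //; apply: ln_le => //.
rewrite -Ha' (@rpow0_eq0 0); [exact: rpow0_ge0| apply: Rle_refl].
Qed.

Section Holder.
Variable I : finType.
Lemma holder (f g : I -> R) a : (forall i, 0 <= f i) -> (forall i, 0 <= g i) -> 0 < a < 1 ->
  rsum (fun i => rpow0 (f i) a * rpow0 (g i) (1 - a)) <= rpow0 (rsum f) a * rpow0 (rsum g) (1 - a).
Proof.
move=> Hf Hg Ha.
have Sf := rsum_ge0 Hf; have Sg := rsum_ge0 Hg.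
case: (Rle_lt_or_eq_dec _ _ Sf) => Sf'; last first.
  rewrite (rsum_ext (G := fun _ => 0)).
    rewrite /rsum big1 //; apply: Rmult_le_pos; exact: rpow0_ge0.
  move=> i; have : f i = 0.
    apply: Rle_antisym => //; rewrite Sf'; exact: (rsum_term i Hf).
  by move=> ->; rewrite (@rpow0_eq0 0) ?Rmult_0_l //; apply: Rle_refl.
case: (Rle_lt_or_eq_dec _ _ Sg) => Sg'; last first.
  rewrite (rsum_ext (G := fun _ => 0)).
    rewrite /rsum big1 //; apply: Rmult_le_pos; exact: rpow0_ge0.
  move=> i; have : g i = 0.
    apply: Rle_antisym => //; rewrite Sg'; exact: (rsum_term i Hg).
  by move=> ->; rewrite (@rpow0_eq0 0) ?Rmult_0_r //; apply: Rle_refl.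
set F := rsum f; set G := rsum g.
set K := rpow0 F a * rpow0 G (1 - a).
have K0 : 0 < K by apply: Rmult_lt_0_compat; exact: rpow0_gt0.
apply: (Rle_trans _ (rsum (fun i => K * (a * (f i / F) + (1 - a) * (g i / G))))).
  apply: rsum_le => i.
  case: (Rle_lt_or_eq_dec _ _ (Hf i)) => fi; last first.
    rewrite -fi (@rpow0_eq0 0) ?Rmult_0_l; last by apply: Rle_refl.
    apply: Rmult_le_pos; first lra.
    apply: Rplus_le_le_0_compat; apply: Rmult_le_pos; try lra; apply: Rdiv_le_0_compat => //; lra.
  case: (Rle_lt_or_eq_dec _ _ (Hg i)) => gi; last first.
    rewrite -gi (@rpow0_eq0 0) ?Rmult_0_r; last by apply: Rle_refl.
    apply: Rmult_le_pos; first lra.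
    apply: Rplus_le_le_0_compat; apply: Rmult_le_pos; try lra; apply: Rdiv_le_0_compat => //; lra.
  have fF : 0 < f i / F by apply: Rdiv_lt_0_compat.
  have gG : 0 < g i / G by apply: Rdiv_lt_0_compat.
  have := young fF gG Ha => Hy.
  have -> : rpow0 (f i) a * rpow0 (g i) (1 - a) = K * exp (a * ln (f i / F) + (1 - a) * ln (g i / G)).
    rewrite /K !rpow0_pos // -!exp_plus; f_equal.
    rewrite !ln_div //; ring.
  by apply: Rmult_le_compat_l => //; lra.
right; rewrite rsum_mull rsum_add.
rewrite (rsum_ext (F := fun i => a * (f i / F)) (G := fun i => (a / F) * f i)); last by move=> i; rewrite /Rdiv; ring.
rewrite (rsum_ext (F := fun i => (1 - a) * (g i / G)) (G := fun i => ((1 - a) / G) * g i)); last by move=> i; rewrite /Rdiv; ring.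
rewrite !rsum_mull -/F -/G; field; rewrite /F /G; split; lra.
Qed.
End Holder.

Section ChainB.
Variable T : finType.
Lemma chain_bounds (w : T -> R) (A : T -> T -> R) lam v N :
  (forall a b, 0 <= A a b) -> (forall a, 0 <= w a) -> is_PF A lam v ->
  0 < rsum (fun x => v x * w x) ->
  0 < rsum (fun t : N.+1.-tuple T => mprob w A t) /\
  ln (rsum (fun t : N.+1.-tuple T => mprob w A t)) <= INR N * ln lam + ln (rsum (fun x => v x * w x)) /\
  INR N * ln lam + ln (rsum (fun x => v x * w x)) - ln (rmax v) <= ln (rsum (fun t : N.+1.-tuple T => mprob w A t)).
Proof.
move=> HA Hw HPF HV.
have HPF' := HPF; case: HPF' => [Hl [Hv [[i1 Hi1] _]]].
have Hm : 0 < rmax v by have := rmax_ge v i1; have := Hv i1; lra.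
rewrite rsum_mprob.
set V := rsum (fun x => v x * w x).
have up : rsum (fun x => w x * Sch A N x) <= lam ^ N * V.
  rewrite /V -rsum_mull; apply: rsum_le => x.
  have := Sch_PF_le N x HA HPF; have := Hw x => ? ?.
  have -> : lam ^ N * (v x * w x) = w x * (lam ^ N * v x) by ring.
  by apply: Rmult_le_compat_l.
have lo : lam ^ N * V / rmax v <= rsum (fun x => w x * Sch A N x).
  rewrite /V /Rdiv -rsum_mull -rsum_mulr; apply: rsum_le => x.
  have := Sch_PF_ge N x HA HPF; have := Hw x => ? ?.
  have -> : lam ^ N * (v x * w x) * / rmax v = w x * (lam ^ N * v x / rmax v) by rewrite /Rdiv; ring.
  by apply: Rmult_le_compat_l.
have lamN : 0 < lam ^ N by apply: pow_lt.
have pos : 0 < lam ^ N * V / rmax v by apply: Rdiv_lt_0_compat => //; exact: Rmult_lt_0_compat.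
have F0 : 0 < rsum (fun x => w x * Sch A N x) by lra.
split => //; split.
  apply: (Rle_trans _ (ln (lam ^ N * V))); first by apply: ln_le.
  by rewrite ln_mult // ln_pow //; lra.
apply: (Rle_trans _ (ln (lam ^ N * V / rmax v))); last by apply: ln_le.
have LV : 0 < lam ^ N * V by exact: Rmult_lt_0_compat.
rewrite (ln_div LV Hm) (ln_mult _ _ lamN HV) (ln_pow _ Hl); rewrite /V; lra.
Qed.

Lemma mpow_pos_transfer (A B : T -> T -> R) :
  (forall a b, 0 <= A a b) -> (forall a b, 0 <= B a b) -> (forall a b, 0 < A a b -> 0 < B a b) ->
  forall N i j, 0 < mpow A N i j -> 0 < mpow B N i j.
Proof.
move=> HA HB HAB; elim=> [|N IH] i j //=.
move/rsum_pos_ex => [l Hl].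
apply: (rsum_pos (i := l)).
  move=> m; apply: Rmult_le_pos; [exact: HB| exact: mpow_ge0].
have h1 : 0 < A i l.
  case: (Rle_lt_or_eq_dec _ _ (HA i l)) => // E; rewrite -E Rmult_0_l in Hl; lra.
have h2 : 0 < mpow A N l j.
  case: (Rle_lt_or_eq_dec _ _ (mpow_ge0 HA N l j)) => // E; rewrite -E Rmult_0_r in Hl; lra.
apply: Rmult_lt_0_compat; [exact: HAB| exact: IH].
Qed.

Lemma irr_transfer (A B : T -> T -> R) :
  (forall a b, 0 <= A a b) -> (forall a b, 0 <= B a b) -> (forall a b, 0 < A a b -> 0 < B a b) ->
  irreducible A -> irreducible B.
Proof.
move=> HA HB HAB HI i j; have [N [H1 H2]] := HI i j.
exists N; split => //; exact: (mpow_pos_transfer HA HB HAB).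
Qed.
End ChainB.


Section Noise.
Variables (X : finZmodType) (Z : finType).

Lemma noise_size n (xt : n.-tuple X) (y : n.-tuple (X * Z)) : size (noise xt y) == n.
Proof. by rewrite /noise size_map size_zip !size_tuple minnn. Qed.

Definition nzt n (xt : n.-tuple X) (y : n.-tuple (X * Z)) : n.-tuple (X * Z) := Tuple (noise_size xt y).

Lemma noise_inj_seq (xt : seq X) (y1 y2 : seq (X * Z)) :
  size y1 = size xt -> size y2 = size xt -> noise xt y1 = noise xt y2 -> y1 = y2.
Proof.
elim: xt y1 y2 => [|x xt IH] [|a y1] [|b y2] //= H1 H2.
case: H1 => H1; case: H2 => H2.
rewrite /noise /= => -[Ha Hb Hr].
congr cons; last exact: IH.
case: a b Ha Hb {Hr} => [a1 a2] [b1 b2] /= Ha -> .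
by rewrite (GRing.addIr _ Ha).
Qed.

Lemma nzt_inj n (xt : n.-tuple X) : injective (nzt xt).
Proof.
move=> y1 y2 H; apply: val_inj; apply: (noise_inj_seq (xt := xt)); rewrite ?size_tuple //.
exact: (congr1 val H).
Qed.

Lemma map_snd_noise (xt : seq X) (y : seq (X * Z)) :
  size xt = size y -> map snd (noise xt y) = map snd y.
Proof.
elim: xt y => [|x xt IH] [|a y] //= H.
rewrite /noise /=; congr cons; exact: (IH y ltac:(by case: H)).
Qed.
End Noise.

Lemma chainp_map_snd (A B : Type) (W : B -> B -> R) (p : A * B) (t : seq (A * B)) :
  chainp W p.2 (map snd t) = chainp (fun a b : A * B => W a.2 b.2) p t.
Proof. by elim: t p => [|y t IH] p //=; rewrite IH. Qed.

Lemma mprob_map_snd (A B : Type) (w : B -> R) (W : B -> B -> R) (t : seq (A * B)) :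
  mprob w W (map snd t) = mprob (fun y : A * B => w y.2) (fun a b : A * B => W a.2 b.2) t.
Proof. by case: t => [|y t] //=; rewrite chainp_map_snd. Qed.

Section Count.
Variables (X : finZmodType) (Z : finType) (Wc : (X * Z)%type -> (X * Z)%type -> R)
          (PXZ1 : (X * Z)%type -> R).
Hypothesis sWc : stochastic Wc.
Hypothesis dP : distribution PXZ1.

Lemma WcZ_sum z' : rsum (fun z => WcZ Wc z z') = 1.
Proof.
rewrite /WcZ rsum_swap.
have := (proj2 sWc) (GRing.zero : X, z'); rewrite rsum_pair => <-.
by [].
Qed.

Lemma PZ1_sum : rsum (PZ1 PXZ1) = 1.
Proof. by rewrite /PZ1 rsum_swap -(proj2 dP) rsum_pair. Qed.

Lemma WcZ_ge0 z z' : 0 <= WcZ Wc z z'.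
Proof. apply: rsum_ge0 => x; exact: (proj1 sWc). Qed.

Lemma PZ1_ge0 z : 0 <= PZ1 PXZ1 z.
Proof. apply: rsum_ge0 => x; exact: (proj1 dP). Qed.

Lemma sum_PZ n : rsum (fun y : n.+1.-tuple (X * Z) => mprob (PZ1 PXZ1) (WcZ Wc) (map snd y)) = INR #|X| ^ n.+1.
Proof.
rewrite (rsum_ext (G := fun y : n.+1.-tuple (X * Z) => mprob (fun y : X * Z => PZ1 PXZ1 y.2) (fun a b : X * Z => WcZ Wc a.2 b.2) y)); last by move=> y; rewrite mprob_map_snd.
rewrite rsum_mprob.
have HS : forall N p, Sch (fun a b : X * Z => WcZ Wc a.2 b.2) N p = INR #|X| ^ N.
  elim=> [|N IH] p; first by rewrite Sch0.
  rewrite SchS (rsum_ext (G := fun y : X * Z => INR #|X| ^ N * WcZ Wc y.2 p.2)); last by move=> y; rewrite IH /=; ring.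
  rewrite rsum_mull rsum_pair (rsum_ext (G := fun _ => 1)); last by move=> x; exact: WcZ_sum.
  by rewrite rsum_const /=; ring.
rewrite (rsum_ext (G := fun y : X * Z => INR #|X| ^ n * PZ1 PXZ1 y.2)); last by move=> y; rewrite HS; ring.
rewrite rsum_mull rsum_pair (rsum_ext (G := fun _ => 1)); last by move=> x; exact: PZ1_sum.
by rewrite rsum_const /=; ring.
Qed.
End Count.


Lemma FM_bounds (M : finType) (Ws : M -> M -> R) (PM1 : M -> R) (k' : nat) th :
  stochastic Ws -> irreducible Ws -> distribution PM1 ->
  let F := rsum (fun mk : k'.+1.-tuple M => rpow0 (mprob PM1 Ws mk) (1 - th)) in
  0 < F /\ ln F <= INR k' * thHs Ws th + dbar_s Ws PM1 th /\
  INR k' * thHs Ws th + dund_s Ws PM1 th <= ln F.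
Proof.
move=> [Wn _] iWs [Pn Ps] F.
have [m0 Hm0] : exists m, 0 < PM1 m by apply: rsum_pos_ex; rewrite Ps; lra.
have An : forall a b, 0 <= As Ws th a b by move=> a b; exact: rpow0_ge0.
have Airr : irreducible (As Ws th).
  apply: (irr_transfer (A := Ws)) => // a b Hab; exact: rpow0_gt0.
have HPF := PF_spec An Airr m0.
have wn : forall a, 0 <= ws PM1 th a by move=> a; exact: rpow0_ge0.
have HV : 0 < rsum (fun x => PF_vec (As Ws th) x * ws PM1 th x).
  apply: (rsum_pos (i := m0)).
    move=> x; apply: Rmult_le_pos => //; have := (proj1 (proj2 HPF)) x; lra.
  apply: Rmult_lt_0_compat; [have := (proj1 (proj2 HPF)) m0; lra| exact: rpow0_gt0].
have -> : F = rsum (fun t : k'.+1.-tuple M => mprob (ws PM1 th) (As Ws th) t).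
  by apply: rsum_ext => t; rewrite mprob_rpow.
have [h1 [h2 h3]] := chain_bounds k' An wn HPF HV.
split => //; split.
  by rewrite /thHs /dbar_s.
by rewrite /thHs /dund_s /dbar_s; lra.
Qed.

Lemma FC_bounds (X : finZmodType) (Z : finType) (Wc : (X * Z)%type -> (X * Z)%type -> R)
  (PXZ1 : (X * Z)%type -> R) (n' : nat) th :
  stochastic Wc -> irreducible Wc -> distribution PXZ1 -> assumption1 Wc ->
  let F := rsum (fun t : n'.+1.-tuple (X * Z) =>
     rpow0 (mprob PXZ1 Wc t) (1 - th) * rpow0 (mprob (PZ1 PXZ1) (WcZ Wc) (map snd t)) th) in
  0 < F /\ ln F <= INR n' * thHc Wc th + dbar_c Wc PXZ1 th /\
  INR n' * thHc Wc th + dund_c Wc PXZ1 th <= ln F.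
Proof.
move=> sWc iWc dP A1 F.
have [Wn _] := sWc; have [Pn Ps] := dP.
have [y0 Hy0] : exists y, 0 < PXZ1 y by apply: rsum_pos_ex; rewrite Ps; lra.
have An : forall a b, 0 <= Ac Wc th a b by move=> a b; apply: Rmult_le_pos; exact: rpow0_ge0.
have Airr : irreducible (Ac Wc th).
  apply: (irr_transfer (A := Wc)) => // a b Hab.
  apply: Rmult_lt_0_compat; first exact: rpow0_gt0.
  apply: rpow0_gt0; rewrite /WcZ (A1 _ _ _ b.1).
  apply: (rsum_pos (i := a.1)); first by move=> x; exact: Wn.
  by case: a Hab => a1 a2; case: b.
have HPF := PF_spec An Airr y0.
have wn : forall a, 0 <= wc PXZ1 th a by move=> a; apply: Rmult_le_pos; exact: rpow0_ge0.
have HV : 0 < rsum (fun x => PF_vec (Ac Wc th) x * wc PXZ1 th x).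
  apply: (rsum_pos (i := y0)).
    move=> x; apply: Rmult_le_pos => //; have := (proj1 (proj2 HPF)) x; lra.
  apply: Rmult_lt_0_compat; first by have := (proj1 (proj2 HPF)) y0; lra.
  apply: Rmult_lt_0_compat; first exact: rpow0_gt0.
  apply: rpow0_gt0; apply: (rsum_pos (i := y0.1)); first by move=> x; exact: Pn.
  by case: y0 Hy0.
have -> : F = rsum (fun t : n'.+1.-tuple (X * Z) => mprob (wc PXZ1 th) (Ac Wc th) t).
  apply: rsum_ext => t.
  rewrite (mprob_rpow (W := Wc)); [|exact: Pn|exact: Wn].
  rewrite (mprob_rpow (W := WcZ Wc)); [|exact: (PZ1_ge0 dP)|exact: (WcZ_ge0 sWc)].
  by rewrite mprob_map_snd -mprob_mul.
have [h1 [h2 h3]] := chain_bounds n' An wn HPF HV.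
split => //; split.
  by rewrite /thHc /dbar_c.
rewrite /thHc /dund_c /dbar_c; apply: (Rle_trans _ _ _ _ h3); right; ring.
Qed.


Theorem mainTheorem10
  (M : finType) (Ws : M -> M -> R) (PM1 : M -> R)
  (X : finZmodType) (Z : finType) (Wc : (X * Z)%type -> (X * Z)%type -> R)
  (PXZ1 : (X * Z)%type -> R) (k n : nat) (th0 dU0 : R) :
  stochastic Ws -> irreducible Ws -> aperiodic Ws -> distribution PM1 ->
  stochastic Wc -> irreducible Wc -> aperiodic Wc -> distribution PXZ1 ->
  assumption1 Wc ->
  (leq 2 k : Prop) -> (leq 2 n : Prop) ->
  let U := Ufun Ws Wc ((INR k - 1) / (INR n - 1)) in
  let Rate := ln (INR #|X|) in
  th0 < 1 ->
  derivable_pt_lim U th0 dU0 ->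
  (1 - th0) * dU0 + U th0 = Rate ->
  forall s rho : R, 0 < s -> th0 < rho < 1 ->
  let E := (INR n - 1) * ((rho - th0) * dU0 + U th0 - U rho)
           + delta2 Ws PM1 Wc PXZ1 Rate th0 rho in
  0 < 1 - 2 * exp E ->
  forall (e : k.-tuple M -> n.-tuple X) (d : n.-tuple (X * Z) -> k.-tuple M),
    exp ((1 + s) / s *
         (- (INR n - 1) * U (rho * (1 + s)) / (1 + s) + (INR n - 1) * U rho
          + delta1 Ws PM1 Wc PXZ1 s rho + ln (1 - 2 * exp E)))
    <= err_prob Ws PM1 Wc PXZ1 e d.
Proof.
move=> sWs iWs _ dPM sWc iWc _ dPXZ A1 k2 n2 U Rate th0lt _ heq s rho s0 [rr1 rr2] E E0 e d.
have [k' Hk] : exists k', k = k'.+1 by clear -k2; case: k k2 => // k' _; exists k'.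
have [n' Hn] : exists n', n = n'.+1 by clear -n2; case: n n2 => // n' _; exists n'.
subst k n.
set P := (k'.+1.-tuple M * n'.+1.-tuple (X * Z))%type.
pose pM (p : P) := mprob PM1 Ws p.1.
pose pC (p : P) := mprob PXZ1 Wc (noise (e p.1) p.2).
pose pZy (y : n'.+1.-tuple (X * Z)) := mprob (PZ1 PXZ1) (WcZ Wc) (map snd y).
pose Q th (p : P) := rpow0 (pM p) (1 - th) * (rpow0 (pC p) (1 - th) * rpow0 (pZy p.2) th).
pose NN th := rsum (Q th).
pose Ind (p : P) := if d p.2 == p.1 then 0 else 1.
have pMn : forall p, 0 <= pM p.
  move=> p; apply: mprob_ge0; [exact: (proj1 dPM)| exact: (proj1 sWs)].
have pCn : forall p, 0 <= pC p.
  move=> p; apply: mprob_ge0; [exact: (proj1 dPXZ)| exact: (proj1 sWc)].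
have pZn : forall y, 0 <= pZy y.
  move=> y; apply: mprob_ge0; [exact: (PZ1_ge0 dPXZ)| exact: (WcZ_ge0 sWc)].
have Qn : forall th p, 0 <= Q th p.
  move=> th p; apply: Rmult_le_pos; [|apply: Rmult_le_pos]; exact: rpow0_ge0.
have Indn : forall p, Ind p = 0 \/ Ind p = 1 by move=> p; rewrite /Ind; case: (_ == _); [left|right].
have Err : err_prob Ws PM1 Wc PXZ1 e d = rsum (fun p : P => Ind p * (pM p * pC p)).
  rewrite /err_prob rsum_pair; apply: rsum_ext => mk; rewrite -rsum_mull; apply: rsum_ext => y.
  by rewrite /Ind /pM /pC /=; ring.
have NNfact : forall th, NN th =
   rsum (fun mk : k'.+1.-tuple M => rpow0 (mprob PM1 Ws mk) (1 - th)) *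
   rsum (fun t : n'.+1.-tuple (X * Z) =>
     rpow0 (mprob PXZ1 Wc t) (1 - th) * rpow0 (mprob (PZ1 PXZ1) (WcZ Wc) (map snd t)) th).
  move=> th; rewrite /NN rsum_pair -rsum_mulr; apply: rsum_ext => mk.
  rewrite /Q /pM /= rsum_mull; congr (_ * _).
  symmetry; rewrite -(rsum_reindex_inj _ (nzt_inj (xt := e mk))); apply: rsum_ext => y.
  rewrite /pC /pZy /= map_snd_noise //; by rewrite !size_tuple.
have INRn : INR n'.+1 - 1 = INR n' by rewrite S_INR; ring.
have INRk : INR k'.+1 - 1 = INR k' by rewrite S_INR; ring.
have n'0 : 0 < INR n' by apply: lt_0_INR; move: n2; rewrite ltnS => /leP; lia.
have NNb : forall th, 0 < NN th /\
    ln (NN th) <= (INR n'.+1 - 1) * U th + (dbar_s Ws PM1 th + dbar_c Wc PXZ1 th) /\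
    (INR n'.+1 - 1) * U th + (dund_s Ws PM1 th + dund_c Wc PXZ1 th) <= ln (NN th).
  move=> th.
  have [f1 [f2 f3]] := FM_bounds k' th sWs iWs dPM.
  have [g1 [g2 g3]] := FC_bounds n' th sWc iWc dPXZ A1.
  have EU : (INR n'.+1 - 1) * U th = INR k' * thHs Ws th + INR n' * thHc Wc th.
    rewrite /U /Ufun INRn INRk; field; lra.
  rewrite NNfact EU; split; first exact: Rmult_lt_0_compat.
  rewrite ln_mult //; split; lra.
have Qexp : forall th p, 0 < pM p -> 0 < pC p -> 0 < pZy p.2 ->
    Q th p = exp ((1 - th) * ln (pM p) + ((1 - th) * ln (pC p) + th * ln (pZy p.2))).
  move=> th p h1 h2 h3; rewrite /Q !rpow0_pos // !exp_plus; ring.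
have Qinv : forall th p, 0 < Q th p -> 0 < pM p /\ 0 < pC p /\ 0 < pZy p.2.
  move=> th p; rewrite /Q => H.
  have a1 := rpow0_ge0 (pM p) (1 - th); have a2 := rpow0_ge0 (pC p) (1 - th);
  have a3 := rpow0_ge0 (pZy p.2) th.
  have b1 : 0 < rpow0 (pM p) (1 - th).
    case: (Rle_lt_or_eq_dec _ _ a1) => // E1; rewrite -E1 Rmult_0_l in H; lra.
  have b23 : 0 < rpow0 (pC p) (1 - th) * rpow0 (pZy p.2) th.
    case: (Rle_lt_or_eq_dec _ _ (Rmult_le_pos _ _ a2 a3)) => // E1; rewrite -E1 Rmult_0_r in H; lra.
  have b2 : 0 < rpow0 (pC p) (1 - th).
    case: (Rle_lt_or_eq_dec _ _ a2) => // E1; rewrite -E1 Rmult_0_l in b23; lra.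
  have b3 : 0 < rpow0 (pZy p.2) th.
    case: (Rle_lt_or_eq_dec _ _ a3) => // E1; rewrite -E1 Rmult_0_r in b23; lra.
  split; [exact: (rpow0_gt0_inv b1)| split; [exact: (rpow0_gt0_inv b2)| exact: (rpow0_gt0_inv b3)]].
set a := / (1 + s).
have a01 : 0 < a < 1.
  rewrite /a; split; first by apply: Rinv_0_lt_compat; lra.
  rewrite -Rinv_1; apply: Rinv_lt_contravar; lra.
set rho' := rho * (1 + s).
have Hp : forall p, Ind p * Q rho p <= rpow0 (Ind p * Q rho' p) a * rpow0 (Ind p * (pM p * pC p)) (1 - a).
  move=> p; case: (Indn p) => ->.
    rewrite !Rmult_0_l (@rpow0_eq0 0) ?Rmult_0_l; [lra| apply: Rle_refl].
  rewrite !Rmult_1_l.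
  case: (Rle_lt_or_eq_dec _ _ (Qn rho p)) => Hq; last first.
    rewrite -Hq; apply: Rmult_le_pos; exact: rpow0_ge0.
  have [h1 [h2 h3]] := Qinv _ _ Hq.
  right; rewrite (Qexp rho) // (Qexp rho') // rpow0_pos; last exact: exp_pos.
  rewrite ln_exp rpow0_pos; last exact: Rmult_lt_0_compat.
  rewrite ln_mult // -exp_plus; f_equal.
  rewrite /a /rho'; field; lra.
have Hold : rsum (fun p => Ind p * Q rho p) <=
            rpow0 (NN rho') a * rpow0 (err_prob Ws PM1 Wc PXZ1 e d) (1 - a).
  apply: (Rle_trans _ _ _ (rsum_le Hp)).
  apply: (Rle_trans _ _ _ (holder _ _ a01)).
  - move=> p; apply: Rmult_le_pos; [by case: (Indn p) => ->; lra| exact: Qn].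
  - move=> p; apply: Rmult_le_pos; [by case: (Indn p) => ->; lra| exact: Rmult_le_pos].
  - rewrite -Err; apply: Rmult_le_compat_r; first exact: rpow0_ge0.
    apply: rpow0_le; try lra.
    + apply: rsum_ge0 => p; apply: Rmult_le_pos; [by case: (Indn p) => ->; lra| exact: Qn].
    + apply: rsum_le => p; have := Qn rho' p; case: (Indn p) => ->; lra.
pose t := (rho - th0) / (1 - rho).
have t0 : 0 <= t by rewrite /t; apply: Rdiv_le_0_compat; lra.
have Xc : leq 1 #|X| by apply/card_gt0P; exists (GRing.zero : X).
have Xpos : 0 < INR #|X| by apply: lt_0_INR; apply/leP.
pose XN := INR #|X| ^ n'.+1.
have XN0 : 0 < XN by apply: pow_lt.
have lnXN : ln XN = INR n'.+1 * Rate by rewrite /XN ln_pow.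
have [N1 [N1up N1lo]] := NNb rho.
have [N0 [N0up N0lo]] := NNb th0.
have [N2 [N2up N2lo]] := NNb rho'.
pose c := NN rho * exp E / XN.
have c0 : 0 < c by rewrite /c; apply: Rdiv_lt_0_compat => //; apply: Rmult_lt_0_compat => //; exact: exp_pos.
have lnc : ln c = ln (NN rho) + E - INR n'.+1 * Rate.
  rewrite /c ln_div //; last by apply: Rmult_lt_0_compat => //; exact: exp_pos.
  by rewrite ln_mult ?ln_exp ?lnXN //; exact: exp_pos.
have Hq : forall p, (1 - Ind p) * Q rho p <= (1 - Ind p) * (c * pZy p.2) + exp (- t * ln c) * Q th0 p.
  move=> p; have q0 := Qn th0 p; have ex := exp_pos (- t * ln c).
  have exq := Rmult_le_pos _ _ (Rlt_le _ _ ex) q0.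
  case: (Indn p) => ->; last first.
    have -> : 1 - 1 = 0 by ring.
    rewrite !Rmult_0_l; lra.
  have -> : 1 - 0 = 1 by ring.
  rewrite !Rmult_1_l.
  have cz : 0 <= c * pZy p.2 by apply: Rmult_le_pos; [lra| exact: pZn].
  case: (Rle_dec (Q rho p) (c * pZy p.2)) => H; first lra.
  have Hq : 0 < Q rho p by lra.
  have [h1 [h2 h3]] := Qinv _ _ Hq.
  have czp : 0 < c * pZy p.2 by apply: Rmult_lt_0_compat.
  have Hl : ln c + ln (pZy p.2) < ln (Q rho p).
    rewrite -ln_mult //; apply: ln_increasing => //; lra.
  move: Hl; rewrite (Qexp rho) // (Qexp th0) // ln_exp -exp_plus => Hl.
  set Lq := (1 - rho) * ln (pM p) + ((1 - rho) * ln (pC p) + rho * ln (pZy p.2)) in Hl *.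
  have -> : - t * ln c + ((1 - th0) * ln (pM p) + ((1 - th0) * ln (pC p) + th0 * ln (pZy p.2)))
          = Lq + t * (Lq - ln c - ln (pZy p.2)).
    rewrite /Lq /t; field; lra.
  have : 0 <= t * (Lq - ln c - ln (pZy p.2)) by apply: Rmult_le_pos => //; lra.
  move=> ht; have := exp_le (x := Lq) (y := Lq + t * (Lq - ln c - ln (pZy p.2))) ltac:(lra); lra.
have key : exp (- t * ln c) * NN th0 <= NN rho * exp E.
  rewrite -(exp_ln (NN th0)) // -(exp_ln (NN rho)) // -!exp_plus; apply: exp_le.
  rewrite lnc.
  set LN0 := ln (NN th0) in N0up *; set LN1 := ln (NN rho) in N1lo *.
  set nn := INR n'.+1 in N0up N1lo *.
  have eqt : (1 - rho) * t = rho - th0 by rewrite /t; field; lra.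
  have iden : (1 - th0) * ((nn - 1) * U rho + (dund_s Ws PM1 rho + dund_c Wc PXZ1 rho) + E)
      - ((1 - rho) * ((nn - 1) * U th0 + (dbar_s Ws PM1 th0 + dbar_c Wc PXZ1 th0)) + (rho - th0) * nn * Rate) = 0.
    rewrite /E /delta2 /nn -heq; field; lra.
  have h0 := Rmult_le_compat_l (1 - rho) _ _ ltac:(lra) N0up.
  have h1 := Rmult_le_compat_l (1 - th0) _ _ ltac:(lra) N1lo.
  apply: (Rmult_le_reg_l (1 - rho)); first lra.
  have -> : (1 - rho) * (- t * (LN1 + E - nn * Rate) + LN0) = - ((1 - rho) * t) * (LN1 + E - nn * Rate) + (1 - rho) * LN0 by ring.
  rewrite eqt.
  nra.
have SB : rsum (fun p => (1 - Ind p) * Q rho p) <= 2 * (NN rho * exp E).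
  apply: (Rle_trans _ _ _ (rsum_le Hq)).
  rewrite rsum_add rsum_mull.
  have S1 : rsum (fun p : P => (1 - Ind p) * (c * pZy p.2)) = c * XN.
    rewrite (rsum_ext (G := fun p : P => c * ((1 - Ind p) * pZy p.2))); last by move=> p; ring.
    rewrite rsum_mull; congr (_ * _).
    rewrite rsum_pair rsum_swap /XN -(sum_PZ sWc dPXZ n').
    apply: rsum_ext => y.
    rewrite (rsum_ext (G := fun mk => if mk == d y then pZy y else 0)).
      by rewrite (rsum_ind1 (fun _ => pZy y)).
    by move=> mk; rewrite /Ind /= eq_sym; case: (mk == d y); ring.
  rewrite S1.
  have -> : c * XN = NN rho * exp E by rewrite /c; field; lra.
  rewrite -/(NN th0); lra.
have SA : NN rho * (1 - 2 * exp E) <= rsum (fun p => Ind p * Q rho p).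
  have -> : rsum (fun p => Ind p * Q rho p) = NN rho - rsum (fun p => (1 - Ind p) * Q rho p).
    rewrite /NN -rsum_sub; apply: rsum_ext => p; ring.
  lra.
have pos : 0 < NN rho * (1 - 2 * exp E) by apply: Rmult_lt_0_compat.
set Er := err_prob Ws PM1 Wc PXZ1 e d in Hold *.
have HH := Rle_trans _ _ _ SA Hold.
have r1 := rpow0_ge0 (NN rho') a.
have Er0 : 0 < Er.
  have r2 : 0 < rpow0 Er (1 - a).
    case: (Rle_lt_or_eq_dec _ _ (rpow0_ge0 Er (1 - a))) => // E2.
    rewrite -E2 Rmult_0_r in HH; lra.
  exact: (rpow0_gt0_inv r2).
have Hln : ln (NN rho) + ln (1 - 2 * exp E) <= a * ln (NN rho') + (1 - a) * ln Er.
  have := ln_le pos HH.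
  rewrite ln_mult // rpow0_pos // rpow0_pos // ln_mult ?ln_exp //; exact: exp_pos.
rewrite -(exp_ln Er) //; apply: exp_le.
have ha : / (1 + s) = a by [].
rewrite /delta1 (Rmult_comm (1 + s) rho) -/rho' /Rdiv !ha.
set LN1 := ln (NN rho) in N1lo Hln *; set LN2 := ln (NN rho') in N2up Hln *.
set nn := INR n'.+1 in N1lo N2up *.
have h2 := Rmult_le_compat_l a _ _ ltac:(lra) N2up.
have hW : - (nn - 1) * U rho' * a + (nn - 1) * U rho +
     (- (dbar_s Ws PM1 rho' + dbar_c Wc PXZ1 rho') * a + dund_s Ws PM1 rho + dund_c Wc PXZ1 rho) +
     ln (1 - 2 * exp E) <= (1 - a) * ln Er.
  nra.
apply: (Rle_trans _ ((1 + s) * / s * ((1 - a) * ln Er))).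
  apply: Rmult_le_compat_l => //; apply: Rmult_le_pos; [lra| apply: Rlt_le; apply: Rinv_0_lt_compat; lra].
right; rewrite /a; field; lra.
Qed.
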